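(* Let $d \geq 2$ and $n_1,\dots,n_d \geq 1$ be integers, and let $G_1$ and $G_2$ be graphs each having at least one edge. Then $K_{n_1,\dots,n_d}$ is isomorphic to a subgraph of $G_1\times G_2$ if and only if there exist positive integers $a_1,\dots,a_d,b_1,\dots,b_d$ such that $K_{a_1,\dots,a_d}$ is isomorphic to a subgraph of $G_1$, $K_{b_1,\dots,b_d}$ is isomorphic to a subgraph of $G_2$, and $n_i \leq a_ib_i$ for all $i\in\{1,\dots,d\}$.
   Context: The direct product $G_1 \times G_2$ has vertex set $V(G_1)\times V(G_2)$, with $(a,v)(b,u)$ an edge iff $ab\in E(G_1)$ and $uv\in E(G_2)$. $K_{n_1,\dots,n_d}$ denotes the complete $d$-partite graph with parts of sizes $n_1,\dots,n_d$. *)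

(* Defs.v *)
From mathcomp Require Import all_boot.
Set Implicit Arguments. Unset Strict Implicit. Unset Printing Implicit Defensive.

Definition simple_graph (T : finType) (e : rel T) : Prop :=
  symmetric e /\ irreflexive e.

Definition has_edge (T : finType) (e : rel T) : Prop :=
  exists x y, e x y.

Definition direct_prod (T1 T2 : finType) (e1 : rel T1) (e2 : rel T2)
  : rel (T1 * T2) :=
  fun p q => e1 p.1 q.1 && e2 p.2 q.2.

(* Vertex set of K_{n_1,...,n_d}: pairs (i, j) with i < d (the part) and
   j < n_i; two vertices are adjacent iff they lie in different parts. *)
Definition Kvert (d : nat) (n : 'I_d -> nat) : finType :=
  {i : 'I_d & 'I_(n i)}.

Definition Kedge (d : nat) (n : 'I_d -> nat) : rel (Kvert n) :=
  fun x y => tag x != tag y.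

Definition contains_Kmulti (T : finType) (e : rel T) (d : nat) (n : 'I_d -> nat)
  : Prop :=
  exists f : Kvert n -> T,
    injective f /\ forall x y : Kvert n, Kedge x y -> e (f x) (f y).

(* Main.v *)
Require Import Defs.
From mathcomp Require Import all_boot.

Section Fwd.
Variables (d : nat) (n : 'I_d -> nat) (T : finType) (e : rel T).
Hypothesis irr : irreflexive e.
Hypothesis d2 : 2 <= d.
Variable g : Kvert n -> T.
Hypothesis ge : forall x y : Kvert n, Kedge x y -> e (g x) (g y).

Definition Apart (i : 'I_d) : {set T} := [set g (Tagged (fun i => 'I_(n i)) j) | j : 'I_(n i)].
Definition acard (i : 'I_d) := #|Apart i|.

Lemma Apart_mem i (z : T) : z \in Apart i -> exists j : 'I_(n i), z = g (Tagged (fun i => 'I_(n i)) j).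
Proof. by move/imsetP=> [j _ ->]; exists j. Qed.

Lemma Apart_adj i i' z z' : i != i' -> z \in Apart i -> z' \in Apart i' -> e z z'.
Proof.
move=> ne /Apart_mem [j ->] /Apart_mem [j' ->]; exact: ge.
Qed.

Definition gemb (x : Kvert acard) : T := @enum_val T (mem (Apart (tag x))) (tagged x).

Lemma gemb_inj : injective gemb.
Proof.
case=> i k [i' k']; rewrite /gemb /=.
case: (eqVneq i i') => [ei|ne] E.
  subst i'; by rewrite (enum_val_inj E).
have := Apart_adj _ _ _ _ ne (enum_valP k) (enum_valP k'); rewrite E irr //.
Qed.

Lemma gemb_edge x y : Kedge x y -> e (gemb x) (gemb y).
Proof. move=> ne; exact: Apart_adj _ _ _ _ ne (enum_valP _) (enum_valP _). Qed.

Lemma acard_pos i : 0 < n i -> 0 < acard i.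
Proof.
move=> p; apply/card_gt0P; exists (g (Tagged (fun i => 'I_(n i)) (Ordinal p))).
by apply/imsetP; exists (Ordinal p).
Qed.
End Fwd.

Theorem mainTheorem2 (d : nat) (n : 'I_d -> nat)
  (T1 T2 : finType) (e1 : rel T1) (e2 : rel T2) :
  2 <= d ->
  (forall i, 1 <= n i) ->
  simple_graph e1 -> simple_graph e2 ->
  has_edge e1 -> has_edge e2 ->
  (contains_Kmulti (direct_prod e1 e2) n <->
   exists a b : 'I_d -> nat,
     [/\ forall i, 0 < a i, forall i, 0 < b i,
         contains_Kmulti e1 a, contains_Kmulti e2 b &
         forall i, n i <= a i * b i]).
Proof.
move=> d2 n1 [_ irr1] [_ irr2] _ _; split.
  move=> [f [finj fe]].
  have ge1 : forall x y : Kvert n, Kedge x y -> e1 (f x).1 (f y).1.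
    by move=> x y /fe /andP [].
  have ge2 : forall x y : Kvert n, Kedge x y -> e2 (f x).2 (f y).2.
    by move=> x y /fe /andP [].
  exists (@acard _ _ _ (fun x => (f x).1)), (@acard _ _ _ (fun x => (f x).2)); split.
  - by move=> i; apply: acard_pos; apply: n1.
  - by move=> i; apply: acard_pos; apply: n1.
  - exists (@gemb _ _ _ (fun x => (f x).1)); split; first exact: gemb_inj.
    exact: gemb_edge.
  - exists (@gemb _ _ _ (fun x => (f x).2)); split; first exact: gemb_inj.
    exact: gemb_edge.
  move=> i; rewrite /acard -cardsX.
  pose F := fun j : 'I_(n i) => f (Tagged (fun i => 'I_(n i)) j).
  have Finj : injective F.
    move=> j j' E; exact: eq_from_Tagged (finj _ _ E).
  rewrite -[n i]card_ord -(card_imset (mem 'I_(n i)) Finj).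
  apply: subset_leq_card; apply/subsetP => z /imsetP [j _ ->].
  rewrite [F j]surjective_pairing in_setX; apply/andP; split; apply/imsetP; by exists j.
move=> [a [b [apos bpos [f1 [f1i f1e]] [f2 [f2i f2e]] nab]]].
have hq : forall i (j : 'I_(n i)), j %/ b i < a i.
  by move=> i j; rewrite ltn_divLR // (leq_trans (ltn_ord j)).
have hr : forall i (j : 'I_(n i)), j %% b i < b i.
  by move=> i j; rewrite ltn_pmod.
exists (fun x => (f1 (Tagged (fun i => 'I_(a i)) (Ordinal (hq (tag x) (tagged x)))),
                 f2 (Tagged (fun i => 'I_(b i)) (Ordinal (hr (tag x) (tagged x)))))); split.
  case=> i j [i' j'] /= [] /f1i E1 /f2i E2.
  have ei : i = i' by move: E1 => /(congr1 tag).
  subst i'.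
  have {E1}E1 := congr1 (@nat_of_ord _) (eq_from_Tagged E1).
  have {E2}E2 := congr1 (@nat_of_ord _) (eq_from_Tagged E2).
  simpl in E1, E2.
  have -> : j = j' by apply/val_inj; rewrite /= (divn_eq j (b i)) E1 E2 -divn_eq.
  by [].
move=> x y ne; rewrite /direct_prod /=; apply/andP; split.
  by apply: f1e.
by apply: f2e.
Qed.
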